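(* Let $\alpha,\beta$ be parameters, $q$ an indeterminate, and $E_n(x;q)=\sum_{k=0}^nE_{n,k}(\alpha,\beta,q)x^k$ with $E_{n,k}$ as in the context. For $n\geq 1$, \[ E_{n}(1;q)=\prod_{i=0}^{n-1}[\alpha+\beta+i]. \]
   Context: For real $x$, $[x]=\frac{1-q^x}{1-q}$. The numbers $E_{n,k}(\alpha,\beta,q)$ are determined by $E_{0,0}=1$, $E_{n,k}=0$ if $k\notin\{0,\dots,n\}$, and for $n\ge1$: $E_{n,k}(\alpha,\beta,q)=q^{\beta+k-1}[n-k+\alpha]E_{n-1,k-1}(\alpha,\beta,q)+[k+\beta]E_{n-1,k}(\alpha,\beta,q)$. *)

(* Defs.v *)
From Stdlib Require Export Reals.
Open Scope R_scope.

Definition qnum (q x : R) : R := (1 - Rpower q x) / (1 - q).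

(* E_{0,0} = 1, E_{0,k} = 0 for k <> 0;
   E_{n,k} = q^(beta+k-1) [n-k+alpha] E_{n-1,k-1} + [k+beta] E_{n-1,k},
   where the first term is absent for k = 0 (E_{n-1,-1} = 0). *)
Fixpoint E (alpha beta q : R) (n : nat) (k : nat) : R :=
  match n with
  | O => match k with O => 1 | _ => 0 end
  | S m =>
      match k with
      | O => qnum q (INR 0 + beta) * E alpha beta q m 0
      | S j => Rpower q (beta + INR k - 1) * qnum q (INR n - INR k + alpha)
                 * E alpha beta q m j
               + qnum q (INR k + beta) * E alpha beta q m k
      end
  end.

(* E_n(x; q) = sum_{k=0}^n E_{n,k} x^k  (sum_f_R0 f n = f 0 + ... + f n). *)
Definition Epoly (alpha beta q : R) (n : nat) (x : R) : R :=
  sum_f_R0 (fun k => E alpha beta q n k * x ^ k) n.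

Fixpoint Rprod (n : nat) (f : nat -> R) : R :=
  match n with
  | O => 1
  | S m => Rprod m f * f m
  end.

(* Main.v *)
Require Import Defs.
From Stdlib Require Import Reals Lra Lia.
Open Scope R_scope.

Lemma E_zero alpha beta q : forall n k, (n < k)%nat -> E alpha beta q n k = 0.
Proof.
  induction n as [|m IH]; intros k Hk.
  - destruct k; [lia|reflexivity].
  - destruct k as [|j]; [lia|]. simpl E.
    rewrite (IH j) by lia. rewrite (IH (S j)) by lia. ring.
Qed.

Lemma qid q a b : q <> 1 -> 0 < q ->
  Rpower q a * qnum q b + qnum q a = qnum q (a + b).
Proof.
  intros h1 h0. unfold qnum. rewrite Rpower_plus.
  assert (1 - q <> 0) by lra. field. auto.
Qed.

Definition Ssum alpha beta q n := sum_f_R0 (fun k => E alpha beta q n k) n.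

Lemma Ssum_step alpha beta q (hq0 : 0 < q) (hq1 : q <> 1) m :
  Ssum alpha beta q (S m) = Ssum alpha beta q m * qnum q (alpha + beta + INR m).
Proof.
  unfold Ssum.
  rewrite decomp_sum by lia. simpl pred.
  set (A := fun j => Rpower q (beta + INR j) * qnum q (INR m - INR j + alpha) * E alpha beta q m j).
  set (B := fun k => qnum q (INR k + beta) * E alpha beta q m k).
  transitivity (B 0%nat + (sum_f_R0 A m + sum_f_R0 (fun j => B (S j)) m)).
  { rewrite <- plus_sum. f_equal.
    apply sum_eq. intros j Hj. unfold A, B. cbv beta. unfold E at 1; fold E.
    replace (beta + INR (S j) - 1) with (beta + INR j) by (rewrite S_INR; ring).
    replace (INR (S m) - INR (S j) + alpha) with (INR m - INR j + alpha) by (rewrite !S_INR; ring).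
    reflexivity. }
  assert (HB : B 0%nat + sum_f_R0 (fun j => B (S j)) m = sum_f_R0 B m).
  { destruct m as [|m'].
    - simpl. unfold B at 2. rewrite (E_zero _ _ _ 0 1) by lia. ring.
    - rewrite (decomp_sum B (S m')) by lia. simpl pred. simpl sum_f_R0 at 1.
      unfold B at 3. rewrite (E_zero _ _ _ (S m') (S (S m'))) by lia. ring. }
  transitivity (sum_f_R0 A m + sum_f_R0 B m); [rewrite <- HB; ring|].
  rewrite <- plus_sum. rewrite (Rmult_comm _ (qnum _ _)), scal_sum.
  apply sum_eq. intros j Hj. unfold A, B.
  replace (qnum q (INR j + beta)) with (qnum q (beta + INR j)) by (f_equal; ring).
  replace (qnum q (alpha + beta + INR m)) with
    (Rpower q (beta + INR j) * qnum q (INR m - INR j + alpha) + qnum q (beta + INR j))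
    by (rewrite qid by auto; f_equal; ring).
  ring.
Qed.

Theorem corollary3p3 (alpha beta q : R) (hq0 : 0 < q) (hq1 : q <> 1) (n : nat) :
  (1 <= n)%nat ->
  Epoly alpha beta q n 1 = Rprod n (fun i => qnum q (alpha + beta + INR i)).
Proof.
  intros _.
  assert (Epoly alpha beta q n 1 = Ssum alpha beta q n) as ->.
  { unfold Epoly, Ssum. apply sum_eq. intros. rewrite pow1. ring. }
  induction n as [|m IH].
  - reflexivity.
  - rewrite Ssum_step by auto. simpl Rprod. rewrite IH. reflexivity.
Qed.
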